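(* Let $X$ be a Polish space and $\lambda$ a probability measure on $X$. Let ${\mathbf T}$ be a thinning kernel of type 2 with weights $(t_{n,j})$ satisfying $t_{m,m}>0$ for all $m\ge0$, and normalizations $Z_m$. Let $(p_n)_{n\in\mathbb N_0}$ be non-negative numbers with $\Xi=\sum_{n\ge0}p_n/n!\in(0,\infty)$ and such that $p_{n_0}=0$ implies $p_n=0$ for all $n\ge n_0$. Let ${\mathsf P}$ be the mixed sample process $${\mathsf P}(\phi)=\frac1\Xi\sum_{n\ge0}\frac{p_n}{n!}\int\phi(\delta_{x_1}+\dots+\delta_{x_n})\,\lambda^n(\mathrm dx_1,\dots,\mathrm dx_n).$$ Then for all non-negative measurable $g$ on $X\times\mathcal M_f(X)$, $$\iint g(x,\mu)\,\delta(\mu,x)\,\mu(\mathrm dx)\,{\mathsf P}(\mathrm d\mu)=\iint g(x,\mu+\delta_x)\,\pi(\mu,\mathrm dx)\,{\mathsf P}(\mathrm d\mu).$$ Here, for ${\mathsf P}$-a.e. $\mu$ with $\mu(X)=m$, $$\pi(\mu,\mathrm dx)=\frac{Z_{m+1}}{Z_m}\,\frac{t_{m+1,m}}{t_{m,m}}\,\frac{p_{m+1}}{p_m}\,\lambda(\mathrm dx),\qquad\delta(\mu,x)=\frac{Z_m}{Z_{m-1}}\cdot\frac{t_{m,m-1}}{t_{m-1,m-1}}.$$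
   Context: $\mathcal M_f(X)$ denotes the set of finite counting measures on $X$, and $|\mu|=\mu(X)$. $\mu^{-[m]}$ is the $m$-th falling factorial measure of $\mu$, defined by $\int g\,\mathrm d\mu^{-[m]}=\int\cdots\int g(y_1,\dots,y_m)(\mu-\delta_{y_1}-\dots-\delta_{y_{m-1}})(\mathrm dy_m)\cdots\mu(\mathrm dy_1)$. Write $\delta_{\mathbf y}=\delta_{y_1}+\dots+\delta_{y_m}$. A thinning kernel of type 2 is given by non-negative numbers $(t_{n,j})_{0\le j\le n}$ via $${\mathbf T}_\mu(\phi)=Z_\mu\sum_{m\ge0}\frac{t_{|\mu|,m}}{m!}\int\phi(\delta_{\mathbf y})\,\mu^{-[m]}(\mathrm d{\mathbf y}),\qquad Z_\mu^{-1}=\sum_{j=0}^{|\mu|}\binom{|\mu|}{j}t_{|\mu|,j}.$$ Since $Z_\mu$ depends only on $|\mu|=m$, it is written $Z_m$. *)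

(* Defs.v *)
From mathcomp Require Import all_boot all_order all_algebra.
From mathcomp Require Import all_classical all_reals all_analysis measurable_realfun.
Set Implicit Arguments. Unset Strict Implicit. Unset Printing Implicit Defensive.
Import Order.TTheory GRing.Theory Num.Theory.
Local Open Scope classical_set_scope.
Local Open Scope ring_scope.

Section Defs.
Context {d : measure_display} {X : measurableType d} {R : realType}.

(* Finite counting measures on X are represented by their values on sets:
   a (finite counting) measure mu : set X -> nat.  Elements of M_f(X) are the
   functions [cm s] for s : seq X. *)
Definition Mf := set X -> nat.

Definition cm (s : seq X) : Mf :=
  fun A => count (fun x => `[< A x >]) s.

Definition Mf_add (mu : Mf) (x : X) : Mf := fun A => (mu A + `[< A x >])%N.

(* A list of atoms (with multiplicity) of a finite counting measure mu,
   i.e. some s with cm s = mu (unique up to permutation); [::] if mu is not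
   a finite counting measure. *)
Definition atoms (mu : Mf) : seq X :=
  match pselect (exists s, cm s = mu) with
  | left e => projT1 (cid e)
  | right _ => [::]
  end.

Definition cmint (mu : Mf) (h : X -> \bar R) : \bar R :=
  (\sum_(x <- atoms mu) h x)%E.

Definition Mf_gen : set (set Mf) :=
  [set B | exists A n, measurable A /\ B = [set mu : Mf | mu A = n]].

Definition MfM : measurableType (sigma_display Mf_gen) := g_sigma_algebraType Mf_gen.

Fixpoint iterint (lam : {measure set X -> \bar R}) (n : nat)
  (phi : seq X -> \bar R) : \bar R :=
  match n with
  | 0 => phi [::]
  | n'.+1 => (\int[lam]_x iterint lam n' (fun s => phi (x :: s)))%E
  end.

Definition Xi (p : nat -> R) : \bar R :=
  (\sum_(0 <= n <oo) (p n / (n`!)%:R)%:E)%E.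

(* The mixed sample process, as an integral operator on non-negative
   functionals of the counting measure:
   P(phi) = 1/Xi * sum_n p_n/n! * \int phi(delta_{x_1}+...+delta_{x_n}) lam^n(dx). *)
Definition Pint (lam : {measure set X -> \bar R}) (p : nat -> R)
  (phi : MfM -> \bar R) : \bar R :=
  ((fine (Xi p))^-1%:E *
   \sum_(0 <= n <oo) ((p n / (n`!)%:R)%:E * iterint lam n (fun s => phi (cm s))))%E.

Definition Znorm (t : nat -> nat -> R) (m : nat) : R :=
  (\sum_(0 <= j < m.+1) ('C(m, j))%:R * t m j)^-1.

(* Density constant of pi(mu, dx) w.r.t. lam(dx) when mu(X) = m. *)
Definition pi_const (t : nat -> nat -> R) (p : nat -> R) (m : nat) : R :=
  Znorm t m.+1 / Znorm t m * (t m.+1 m / t m m) * (p m.+1 / p m).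

(* delta(mu, x) when mu(X) = m. *)
Definition delta_const (t : nat -> nat -> R) (m : nat) : R :=
  Znorm t m / Znorm t m.-1 * (t m m.-1 / t m.-1 m.-1).

End Defs.

(* Main.v *)
Require Import Defs.
From mathcomp Require Import all_boot all_order all_algebra.
From mathcomp Require Import all_classical all_reals all_analysis measurable_realfun.
From mathcomp.algebra_tactics Require Import ring.
Import Order.TTheory GRing.Theory Num.Theory.
Local Open Scope classical_set_scope.
Local Open Scope ring_scope.

Section Infra.
Set Implicit Arguments. Unset Strict Implicit.
Context (d : measure_display) (X : measurableType d) (R : realType)
  (lam : probability X R).
Local Open Scope ereal_scope.

Definition allm {d'} {U : measurableType d'} (xs : seq (U -> X)) : Prop :=
  foldr (fun f P => measurable_fun setT f /\ P) True xs.
Definition evs {d'} {U : measurableType d'} (xs : seq (U -> X)) (u : U) : seq X :=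
  map (fun f => f u) xs.

Definition JM {d'} (T : measurableType d') (f : T -> seq X -> \bar R) : Prop :=
  forall d'' (U : measurableType d'') (a : U -> T) (xs : seq (U -> X)),
    measurable_fun setT a -> allm xs ->
    measurable_fun setT (fun u => f (a u) (evs xs u)).
Arguments JM {d'} T f.

Definition SM (f : seq X -> \bar R) : Prop :=
  forall d'' (U : measurableType d'') (xs : seq (U -> X)),
    allm xs -> measurable_fun setT (fun u => f (evs xs u)).

Lemma allm_cat d' (U : measurableType d') (s1 s2 : seq (U -> X)) :
  allm s1 -> allm s2 -> allm (s1 ++ s2).
Proof. by elim: s1 => //= f s IH [mf hs] h2; split => //; apply: IH. Qed.

Lemma allm_drop d' (U : measurableType d') (s : seq (U -> X)) i :
  allm s -> allm (drop i s).
Proof. elim: s i => //= f s IH [|i] [mf hs] //=; exact: IH. Qed.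

Lemma allm_take d' (U : measurableType d') (s : seq (U -> X)) i :
  allm s -> allm (take i s).
Proof. elim: s i => //= f s IH [|i] [mf hs] //=; split => //; exact: IH. Qed.

Lemma allm_rot d' (U : measurableType d') (s : seq (U -> X)) i :
  allm s -> allm (rot i s).
Proof. by move=> h; rewrite /rot; apply: allm_cat; [apply: allm_drop|apply: allm_take]. Qed.

Lemma allm_rcons d' (U : measurableType d') (s : seq (U -> X)) f :
  allm s -> measurable_fun setT f -> allm (rcons s f).
Proof. by move=> h mf; rewrite -cats1; apply: allm_cat. Qed.

Lemma JM_step d1 d2 (T : measurableType d1) (V : measurableType d2) f
  (b : V -> T) (c : V -> X) :
  measurable_fun setT b -> measurable_fun setT c -> JM T f ->
  JM V (fun v s => f (b v) (c v :: s)).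
Proof.
move=> mb mc H d'' U a xs ma hxs.
apply: (H _ _ (b \o a) ((c \o a) :: xs)); first exact: measurableT_comp.
by split => //; exact: measurableT_comp.
Qed.

Lemma SM_JM d1 (T : measurableType d1) f : SM f -> JM T (fun _ => f).
Proof. by move=> H d'' U a xs _ hx; apply: H. Qed.

Lemma SM_cons f : SM f -> JM X (fun x s => f (x :: s)).
Proof. by move=> H d'' U a xs ma hx; apply: (H _ _ (a :: xs)). Qed.

Lemma SM_consc f y : SM f -> SM (fun s => f (y :: s)).
Proof. by move=> H d'' U xs hx; apply: (H _ _ (cst y :: xs)); split => //; exact: measurable_cst. Qed.

Lemma SM_rcons f : SM f -> JM X (fun x s => f (rcons s x)).
Proof.
move=> H d'' U a xs ma hx.
have := H _ _ (rcons xs a) (allm_rcons hx ma).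
by congr measurable_fun; apply/funext => u; rewrite /evs map_rcons.
Qed.

Lemma SM_rot f i : SM f -> SM (fun s => f (rot i s)).
Proof.
move=> H d'' U xs hx.
have := H _ _ (rot i xs) (allm_rot i hx).
by congr measurable_fun; apply/funext => u; rewrite /evs map_rot.
Qed.

Lemma SM_D f1 f2 : SM f1 -> SM f2 -> SM (fun s => f1 s + f2 s).
Proof. by move=> H1 H2 d'' U xs hx; apply: emeasurable_funD; [apply: H1|apply: H2]. Qed.

Lemma SM_Z f (k : R) : SM f -> SM (fun s => f s * k%:E).
Proof. by move=> H d'' U xs hx; apply: emeasurable_funM; [apply: H|exact: measurable_cst]. Qed.

Lemma SM_sum I (r : seq I) (F : I -> seq X -> \bar R) :
  (forall i, SM (F i)) -> SM (fun s => \sum_(i <- r) F i s).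
Proof. by move=> H d'' U xs hx; apply: emeasurable_sum => i; apply: H. Qed.

Lemma iterint_ge0 n f : (forall s, 0 <= f s) -> 0 <= iterint lam n f.
Proof.
elim: n f => [|n IH] f f0 //=.
by apply: integral_ge0 => x _; apply: IH.
Qed.

Lemma eq_iterint n f g : (forall s, size s = n -> f s = g s) ->
  iterint lam n f = iterint lam n g.
Proof.
elim: n f g => [|n IH] f g H /=; first exact: H.
congr (integral _ _ _); apply/funext => x; apply: IH => s hs; apply: H; rewrite /= hs.
by [].
Qed.

Lemma iterint_rcons n f :
  iterint lam n.+1 f = iterint lam n (fun s => \int[lam]_x f (rcons s x)).
Proof.
elim: n f => [|n IH] f //=.
congr (integral _ _ _). apply/funext => y. exact: (IH (fun s => f (y :: s))).
Qed.

Lemma JM_iterint n d1 (T : measurableType d1) f :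
  (forall t s, 0 <= f t s) -> JM T f ->
  measurable_fun setT (fun t => iterint lam n (f t)).
Proof.
elim: n d1 T f => [|n IH] d1 T f f0 H /=.
  exact: (H _ _ id [::] (@measurable_id _ T setT) I).
have := IH _ (T * X)%type (fun tx s => f tx.1 (tx.2 :: s)) (fun _ _ => f0 _ _)
  (JM_step measurable_fst measurable_snd H).
move=> mh.
exact: (measurable_fun_fubini_tonelli_F (m2 := lam) _ mh (fun z => iterint_ge0 _ (fun s => f0 _ _))).
Qed.


Lemma iterint_fubini n F : (forall x s, 0 <= F x s) -> JM X F ->
  iterint lam n (fun s => \int[lam]_x F x s) = \int[lam]_x iterint lam n (F x).
Proof.
elim: n F => [|n IH] F F0 H //=.
transitivity (\int[lam]_y \int[lam]_x iterint lam n (fun s => F x (y :: s))).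
  congr (integral _ _ _); apply/funext => y.
  apply: (IH (fun x s => F x (y :: s))) => //.
  exact: (JM_step (@measurable_id _ X setT) (@measurable_cst _ _ X X setT y) H).
have mh := JM_iterint n (f := fun yx s => F yx.2 (yx.1 :: s)) (fun _ _ => F0 _ _)
  (JM_step measurable_snd measurable_fst H).
exact: (fubini_tonelli (m1 := lam) (m2 := lam) _ mh (fun z => iterint_ge0 _ (fun s => F0 _ _))).
Qed.

Lemma iterint_D n f1 f2 : (forall s, 0 <= f1 s) -> (forall s, 0 <= f2 s) ->
  SM f1 -> SM f2 ->
  iterint lam n (fun s => f1 s + f2 s) = iterint lam n f1 + iterint lam n f2.
Proof.
elim: n f1 f2 => [|n IH] f1 f2 h1 h2 m1 m2 //=.
transitivity (\int[lam]_x (iterint lam n (fun s => f1 (x :: s)) +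
                          iterint lam n (fun s => f2 (x :: s)))).
  congr (integral _ _ _); apply/funext => y.
  by apply: (IH (fun s => f1 (y :: s)) (fun s => f2 (y :: s))) => //; apply: SM_consc.
apply: ge0_integralD => //.
- by move=> x _; apply: iterint_ge0.
- exact: (JM_iterint n (f := fun x s => f1 (x :: s)) (fun _ _ => h1 _) (SM_cons m1)).
- by move=> x _; apply: iterint_ge0.
- exact: (JM_iterint n (f := fun x s => f2 (x :: s)) (fun _ _ => h2 _) (SM_cons m2)).
Qed.

Lemma iterint_Z n f (k : R) : (0 <= k)%R -> (forall s, 0 <= f s) -> SM f ->
  iterint lam n (fun s => k%:E * f s) = k%:E * iterint lam n f.
Proof.
move=> k0; elim: n f => [|n IH] f h1 m1 //=.
transitivity (\int[lam]_x (k%:E * iterint lam n (fun s => f (x :: s)))).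
  congr (integral _ _ _); apply/funext => y.
  by apply: (IH (fun s => f (y :: s))) => //; apply: SM_consc.
apply: ge0_integralZl => //.
- exact: (JM_iterint n (f := fun x s => f (x :: s)) (fun _ _ => h1 _) (SM_cons m1)).
- by move=> x _; apply: iterint_ge0.
Qed.

Lemma iterint0 n : iterint lam n (fun _ => 0) = 0.
Proof.
elim: n => [|n IH] //=.
by rewrite (_ : (fun x => _) = fun _ => 0) ?integral0 //; apply/funext => x; rewrite IH.
Qed.

Lemma iterint_sum n I (r : seq I) (F : I -> seq X -> \bar R) :
  (forall i s, 0 <= F i s) -> (forall i, SM (F i)) ->
  iterint lam n (fun s => \sum_(i <- r) F i s) = \sum_(i <- r) iterint lam n (F i).
Proof.
move=> F0 mF; elim: r => [|i r IH].
  rewrite big_nil -[RHS](iterint0 n); apply: eq_iterint => s _; by rewrite big_nil.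
rewrite big_cons -IH -iterint_D //.
- by apply: eq_iterint => s _; rewrite big_cons.
- by move=> s; apply: sume_ge0 => j _.
- exact: SM_sum.
Qed.

Lemma iterint_rot1 n K : (forall s, 0 <= K s) -> SM K ->
  iterint lam n.+1 (fun s => K (rot 1 s)) = iterint lam n.+1 K.
Proof.
move=> K0 mK.
transitivity (\int[lam]_x iterint lam n (fun s => K (rcons s x))).
  by rewrite /=; congr (integral _ _ _); apply/funext => x;
     apply: eq_iterint => s _; rewrite rot1_cons.
rewrite -iterint_fubini //; last exact: SM_rcons.
by rewrite iterint_rcons.
Qed.

Lemma iterint_rot n K i : (i <= n)%N -> (forall s, 0 <= K s) -> SM K ->
  iterint lam n (fun s => K (rot i s)) = iterint lam n K.
Proof.
move=> + K0 mK; elim: i => [|i IH] hi.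
  by apply: eq_iterint => s _; rewrite rot0.
case: n hi IH => [//|n] hi IH.
rewrite -IH; last exact: ltnW.
rewrite -(@iterint_rot1 n (fun s => K (rot i s))) //; last exact: SM_rot.
apply: eq_iterint => s hs.
by rewrite -rotD ?addn1 ?hs.
Qed.


Lemma SM_Zl f (k : R) : SM f -> SM (fun s => k%:E * f s).
Proof. by move=> H d'' U xs hx; apply: emeasurable_funM; [exact: measurable_cst|apply: H]. Qed.

Lemma cm_perm (s1 s2 : seq X) : perm_eq s1 s2 -> cm s1 = cm s2.
Proof. by move=> /permP H; apply/funext => A; exact: H. Qed.

Lemma cm_inj_perm (s1 s2 : seq X) : cm s1 = cm s2 -> perm_eq s1 s2.
Proof.
move=> H; apply/permP => a.
have := congr1 (fun mu : Mf => mu (fun x => is_true (a x))) H; rewrite /cm.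
by rewrite !(eq_count (a2 := a)) // => x; rewrite asboolb.
Qed.

Lemma atoms_cm (s : seq X) : perm_eq (atoms (cm s)) s.
Proof.
rewrite /atoms; case: pselect => [e|n]; last by exfalso; apply: n; exists s.
by apply: cm_inj_perm; exact: (projT2 (cid e)).
Qed.

Lemma cmint_cm (s : seq X) (h : X -> \bar R) : cmint (cm s) h = \sum_(x <- s) h x.
Proof. by rewrite /cmint; apply: perm_big; exact: atoms_cm. Qed.

Lemma cm_setT (s : seq X) : cm s setT = size s.
Proof. by rewrite /cm (eq_count (a2 := predT)) ?count_predT // => x; apply/asboolP. Qed.

Lemma Mf_add_cm (s : seq X) x : Mf_add (cm s) x = cm (x :: s).
Proof. by apply/funext => A; rewrite /Mf_add /cm /= addnC. Qed.

Lemma count_meas d' (U : measurableType d') (xs : seq (U -> X)) (A : set X) :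
  measurable A -> allm xs -> forall n,
  measurable [set u | count (fun x => `[< A x >]) (evs xs u) = n].
Proof.
move=> mA; elim: xs => [|f xs IH] /=.
  move=> _ [|n].
    by rewrite (_ : [set u | _] = setT) //; apply/seteqP; split => u //=.
  by rewrite (_ : [set u | _] = set0) //; apply/seteqP; split => u //=.
move=> [mf hx] n.
have mfA : measurable (f @^-1` A) by have := mf measurableT _ mA; rewrite setTI.
case: n => [|n].
  rewrite (_ : [set u | _] = ~` (f @^-1` A) `&`
     [set u | count (fun x => `[< A x >]) (evs xs u) = 0%N]).
    by apply: measurableI; [exact: measurableC|exact: IH hx _].
  apply/seteqP; split => u /=; case: asboolP => Ha /=.
  - by rewrite add1n.
  - by rewrite add0n.
  - by case.
  - by rewrite add0n => -[].
rewrite (_ : [set u | _] = (f @^-1` A `&`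
     [set u | count (fun x => `[< A x >]) (evs xs u) = n]) `|` (~` (f @^-1` A) `&`
     [set u | count (fun x => `[< A x >]) (evs xs u) = n.+1])).
  by apply: measurableU; apply: measurableI => //; [exact: IH hx _|exact: measurableC|exact: IH hx _].
apply/seteqP; split => u /=; case: asboolP => Ha /=.
- by rewrite add1n => -[->]; left.
- by rewrite add0n => ->; right.
- by rewrite add1n => -[[_ ->]|[]].
- by rewrite add0n => -[[]|[_ ->]].
Qed.

Lemma cm_meas d' (U : measurableType d') (xs : seq (U -> X)) :
  allm xs -> measurable_fun setT (fun u => (cm (evs xs u) : @MfM d X)).
Proof.
move=> hx; apply: (@measurability _ _ _ (@MfM d X) setT _ (@Mf_gen d X)) => //.
move=> _ [B [A [n [mA ->]]] <-].
rewrite setTI; exact: count_meas.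
Qed.

Definition Kf (g : (X * @MfM d X)%type -> \bar R) (s : seq X) : \bar R :=
  match s with [::] => 0 | x :: _ => g (x, (cm s : @MfM d X)) end.

Lemma SM_Kf g : measurable_fun setT g -> SM (Kf g).
Proof.
move=> mg d'' U xs; case: xs => [|f xs] hx; first exact: measurable_cst.
case: hx => [mf hx].
apply: measurableT_comp mg _.
exact: (measurable_fun_pair mf (@cm_meas _ U (f :: xs) (conj mf hx))).
Qed.

Lemma Kf_ge0 g : (forall z, 0 <= g z) -> forall s, 0 <= Kf g s.
Proof. by move=> g0 [|x s]; [exact: lexx|exact: g0]. Qed.

Lemma Kf_rot g (s : seq X) x0 i : (i < size s)%N ->
  Kf g (rot i s) = g (nth x0 s i, cm s).
Proof.
move=> hi; rewrite -(cm_perm (s1 := rot i s)); last by rewrite perm_rot.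
by rewrite /Kf /rot (drop_nth x0 hi).
Qed.

Lemma series_shift (a b : nat -> \bar R) : (forall n, 0 <= a n) -> a 0%N = 0 ->
  (forall m, a m.+1 = b m) ->
  \sum_(0 <= n <oo) a n = \sum_(0 <= n <oo) b n.
Proof.
move=> a0 a00 ab.
rewrite (_ : (fun N => \sum_(0 <= n < N) b n) = fun N => \sum_(0 <= n < N.+1) a n).
  apply/esym/cvg_lim => //.
  have cS : cvgn (fun N => \sum_(0 <= n < N) a n) by apply: is_cvg_ereal_nneg_natsum.
  by rewrite (cvg_shiftS (fun N => \sum_(0 <= n < N) a n)).
apply/funext => N; rewrite big_nat_recl // a00 add0e.
by apply: eq_bigr => i _; rewrite ab.
Qed.


Lemma sume_cst n (e : \bar R) : \sum_(0 <= i < n) e = n%:R%:E * e.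
Proof.
rewrite mule_natl; elim: n => [|n IH]; first by rewrite big_geq.
by rewrite big_nat_recr // IH muleS addeC.
Qed.

End Infra.

Theorem mainTheorem10 (d : measure_display) (X : measurableType d)
  (R : realType) (lam : probability X R)
  (t : nat -> nat -> R) (p : nat -> R)
  (t_ge0 : forall n j, (j <= n)%N -> 0 <= t n j)
  (t_diag_gt0 : forall m, 0 < t m m)
  (p_ge0 : forall n, 0 <= p n)
  (Xi_pos : (0 < Xi p)%E) (Xi_fin : (Xi p < +oo)%E)
  (p_supp : forall n0, p n0 = 0 -> forall n, (n0 <= n)%N -> p n = 0)
  (g : (X * @MfM d X)%type -> \bar R)
  (g_ge0 : forall z, (0 <= g z)%E)
  (g_meas : measurable_fun setT g) :
  Pint lam p (fun mu : @MfM d X =>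
    cmint mu (fun x => g (x, mu) * (delta_const t (mu setT))%:E)%E)
  = Pint lam p (fun mu : @MfM d X =>
    (\int[lam]_x (g (x, Mf_add mu x) * (pi_const t p (mu setT))%:E))%E).
Proof.
have Z0 m : 0 <= Znorm t m.
  rewrite /Znorm invr_ge0 big_seq; apply: sumr_ge0 => j.
  rewrite mem_index_iota => /andP[_ hj]; apply: mulr_ge0 => //; exact: t_ge0.
have del0 m : 0 <= delta_const t m.
  rewrite /delta_const; apply: mulr_ge0; first exact: divr_ge0.
  by apply: divr_ge0; [apply: t_ge0; exact: leq_pred|exact: ltW].
have pi0 m : 0 <= pi_const t p m.
  rewrite /pi_const; apply: mulr_ge0; last exact: divr_ge0.
  apply: mulr_ge0; first exact: divr_ge0.
  by apply: divr_ge0; [apply: t_ge0; exact: leqnSn|exact: ltW].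
have c0 n : 0 <= p n / (n`!)%:R by apply: divr_ge0.
have Kg0 := Kf_ge0 g_ge0.
have SK := SM_Kf g_meas.
rewrite /Pint; congr (_ * _)%E; apply: series_shift.
- move=> n; apply: mule_ge0; first by rewrite lee_fin.
  apply: iterint_ge0 => s; rewrite cmint_cm; apply: sume_ge0 => x _.
  by apply: mule_ge0; rewrite ?lee_fin.
- by rewrite /= cmint_cm big_nil mule0.
move=> m.
set de := delta_const t m.+1; set pp := pi_const t p m.
have L : iterint lam m.+1 (fun s => cmint (cm s)
     (fun x => g (x, cm s) * (delta_const t (cm s setT))%:E))%E =
   ((m.+1)%:R%:E * (de%:E * iterint lam m.+1 (Kf g)))%E.
  transitivity (iterint lam m.+1 (fun s => \sum_(0 <= i < m.+1) (de%:E * Kf g (rot i s))))%E.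
    apply: eq_iterint => s hs; rewrite cmint_cm cm_setT hs.
    case: s hs => [//|x0 s'] hs; rewrite (big_nth x0) hs.
    apply: eq_big_nat => i /andP[_ hi].
    by rewrite (Kf_rot g x0) ?hs // muleC.
  rewrite iterint_sum; last 2 first.
  - by move=> i s; apply: mule_ge0; [rewrite lee_fin; exact: del0|exact: Kg0].
  - by move=> i; exact: (@SM_rot _ _ _ (fun s => de%:E * Kf g s)%E i (SM_Zl de SK)).
  rewrite (eq_big_nat _ _ (F2 := fun _ => iterint lam m.+1 (fun s => de%:E * Kf g s)%E)); last first.
    move=> i /andP[_ hi].
    apply: (@iterint_rot d X R lam m.+1 (fun s => de%:E * Kf g s)%E i).
    - exact: ltnW.
    - by move=> s; apply: mule_ge0; [rewrite lee_fin; exact: del0|exact: Kg0].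
    - exact: SM_Zl.
  by rewrite sume_cst iterint_Z // del0.
have Rr : iterint lam m (fun s => \int[lam]_x (g (x, Mf_add (cm s) x) *
     (pi_const t p (cm s setT))%:E))%E = (pp%:E * iterint lam m.+1 (Kf g))%E.
  transitivity (iterint lam m (fun s => \int[lam]_x (pp%:E * Kf g (x :: s))))%E.
    apply: eq_iterint => s hs; congr (integral _ _ _); apply/funext => x.
    by rewrite Mf_add_cm cm_setT hs muleC.
  rewrite (@iterint_fubini d X R lam m (fun x s => pp%:E * Kf g (x :: s))%E); last 2 first.
  - by move=> x s; apply: mule_ge0; [rewrite lee_fin; exact: pi0|exact: Kg0].
  - exact: (SM_cons (SM_Zl pp SK)).
  by rewrite -iterint_Z // pi0.
rewrite L Rr !muleA -!EFinM; congr (_ * _)%E; congr EFin.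
rewrite /de /pp /delta_const /pi_const /=.
have [pm0|pm0] := eqVneq (p m) 0.
  by rewrite pm0 (p_supp m pm0 m.+1 (leqnSn m)) !(mul0r, mulr0).
rewrite factS natrM.
field; apply/and5P; split => //.
- by rewrite gt_eqF.
- rewrite gt_eqF // /Znorm invr_gt0 big_nat_recr //=.
  apply: (lt_le_trans (y := 'C(m, m)%:R * t m m)); first by rewrite binn mul1r.
  rewrite lerDr big_seq; apply: sumr_ge0 => j.
  rewrite mem_index_iota => /andP[_ hj]; apply: mulr_ge0 => //; apply: t_ge0.
  exact: ltnW.
Qed.
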